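(* Let $G=(V,E,w)$ be a connected, locally finite weighted graph with edge weights $w_e>0$, let $x\in V$, and let $u:V\to\mathbb{R}$ satisfy $\sum_{y:\,(v,y)\in E} w_{vy}(u(y)-u(v))=0$ for every $v\in V$. For integers $k\ge 0$ define $$N(k) = \sum_{y \in V:\, d(x,y)=k+1} d_{\mathrm{in}}(y)\, u(y)^2 \;-\; \sum_{y \in V:\, d(x,y)=k} d_{\mathrm{out}}(y)\, u(y)^2 .$$ Then $N(k)\ge 0$ and $N(k+1)\ge N(k)$ for all $k\ge 0$.
   Context: $d(\cdot,\cdot)$ is the unweighted graph (shortest-path, number of edges) distance in $G$. Let $V_k=\{v\in V: d(x,v)=k\}$. For $v\in V_k$, the weighted in-degree is $d_{\mathrm{in}}(v)=\sum_{y\in V_{k-1},\,(y,v)\in E} w_{yv}$ and the weighted out-degree is $d_{\mathrm{out}}(v)=\sum_{y\in V_{k+1},\,(v,y)\in E} w_{vy}$. *)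

(* Defs.v *)
From HB Require Import structures.
From mathcomp Require Import all_boot all_order all_algebra.
From mathcomp Require Import boolp classical_sets fsbigop reals.
Unset Printing Implicit Defensive.
Import Order.TTheory GRing.Theory Num.Theory.
Local Open Scope ring_scope.

(* A locally finite graph on a (possibly infinite) vertex type V is given by
   its neighbour lists: (a, b) is an edge iff b \in nbrs a. *)

Fixpoint reachN (V : eqType) (nbrs : V -> seq V) (n : nat) (a b : V) : bool :=
  match n with
  | 0 => a == b
  | n'.+1 => has (fun c => reachN V nbrs n' c b) (nbrs a)
  end.

Definition isdist (V : eqType) (nbrs : V -> seq V) (x y : V) (k : nat) : bool :=
  reachN V nbrs k x y && all (fun j => ~~ reachN V nbrs j x y) (iota 0 k).

(* weighted in-degree of v, where v is taken to lie in V_k *)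
Definition d_in (R : realType) (V : eqType) (nbrs : V -> seq V) (w : V -> V -> R)
    (x : V) (k : nat) (v : V) : R :=
  \sum_(y <- nbrs v | (0 < k)%N && isdist V nbrs x y k.-1) w y v.

(* weighted out-degree of v, where v is taken to lie in V_k *)
Definition d_out (R : realType) (V : eqType) (nbrs : V -> seq V) (w : V -> V -> R)
    (x : V) (k : nat) (v : V) : R :=
  \sum_(y <- nbrs v | isdist V nbrs x y k.+1) w v y.

Definition Nflux (R : realType) (V : choiceType) (nbrs : V -> seq V) (w : V -> V -> R)
    (u : V -> R) (x : V) (k : nat) : R :=
  (\sum_(y \in [set y | isdist V nbrs x y k.+1]) d_in R V nbrs w x k.+1 y * u y ^+ 2)
  - (\sum_(y \in [set y | isdist V nbrs x y k]) d_out R V nbrs w x k y * u y ^+ 2).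

Arguments reachN {V} nbrs n a b.
Arguments isdist {V} nbrs x y k.
Arguments d_in {R V} nbrs w x k v.
Arguments d_out {R V} nbrs w x k v.
Arguments Nflux {R V} nbrs w u x k.

(* Main.v *)
Require Import Defs.
From HB Require Import structures.
From mathcomp Require Import all_boot all_order all_algebra.
From mathcomp Require Import boolp classical_sets fsbigop reals.
From mathcomp Require Import zify ring lra.
Import Order.TTheory GRing.Theory Num.Theory.
Set Implicit Arguments. Unset Strict Implicit.
Local Open Scope ring_scope.

Lemma reachN_snoc (V : eqType) (nbrs : V -> seq V) n a b c :
  reachN nbrs n a c -> b \in nbrs c -> reachN nbrs n.+1 a b.
Proof.
elim: n a => [|n IH] a /=.
  by move=> /eqP -> hb; apply/hasP; exists b.
by case/hasP=> d hd hdc hb; apply/hasP; exists d => //; apply: IH hb.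
Qed.

Lemma reachN_snocP (V : eqType) (nbrs : V -> seq V) n a b :
  reachN nbrs n.+1 a b -> exists2 c, reachN nbrs n a c & b \in nbrs c.
Proof.
elim: n a => [|n IH] a /=.
  by case/hasP=> d hd /eqP <-; exists a.
case/hasP=> d hd /IH [c hc hb]; exists c => //.
by apply/hasP; exists d.
Qed.

Lemma isdist_min (V : eqType) (nbrs : V -> seq V) x y k j :
  isdist nbrs x y k -> (j < k)%N -> ~~ reachN nbrs j x y.
Proof.
by case/andP=> _ /allP H hj; apply: H; rewrite mem_iota.
Qed.

Lemma isdist_eq (V : eqType) (nbrs : V -> seq V) x y k j :
  isdist nbrs x y k -> isdist nbrs x y j = (j == k).
Proof.
move=> hk; apply/idP/eqP => [hj|->//].
have rk := proj1 (andP hk); have rj := proj1 (andP hj).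
case: (ltngtP j k) => // h.
  by move: (isdist_min hk h); rewrite rj.
by move: (isdist_min hj h); rewrite rk.
Qed.

Lemma reach_dist (V : eqType) (nbrs : V -> seq V) x y n :
  reachN nbrs n x y -> exists2 m, (m <= n)%N & isdist nbrs x y m.
Proof.
move=> hn.
have ex : exists m, reachN nbrs m x y by exists n.
case: (ex_minnP ex) => m hm hmin.
exists m; first exact: hmin.
rewrite /isdist hm /=; apply/allP => j; rewrite mem_iota /= => hj.
apply/negP => rj; move: (hmin _ rj); lia.
Qed.

Lemma reachN_sym (V : eqType) (nbrs : V -> seq V)
  (nbrs_sym : forall a b, (b \in nbrs a) = (a \in nbrs b)) n a b :
  reachN nbrs n a b -> reachN nbrs n b a.
Proof.
elim: n a b => [|n IH] a b /=; first by move=> /eqP ->.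
case/hasP=> c hc /IH hbc; apply: reachN_snoc hbc _.
by rewrite -nbrs_sym.
Qed.

Lemma nbr_dist (V : eqType) (nbrs : V -> seq V)
  (nbrs_sym : forall a b, (b \in nbrs a) = (a \in nbrs b)) x v y k :
  isdist nbrs x v k -> y \in nbrs v ->
  exists m, [/\ isdist nbrs x y m, (k <= m.+1)%N & (m <= k.+1)%N].
Proof.
move=> hv hy.
have r1 : reachN nbrs k.+1 x y by apply: reachN_snoc hy; case/andP: hv.
case: (reach_dist r1) => m hm dm; exists m; split => //.
have r2 : reachN nbrs m.+1 x v.
  have rm : reachN nbrs m x y by case/andP: dm.
  by apply: (reachN_snoc rm); rewrite -nbrs_sym.
case: (leqP k m.+1) => // h.
by move: (isdist_min hv h); rewrite r2.
Qed.

Fixpoint wseq (V : eqType) (nbrs : V -> seq V) (x : V) (n : nat) : seq V :=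
  match n with
  | 0 => [:: x]
  | n'.+1 => undup (flatten (map nbrs (wseq nbrs x n')))
  end.

Lemma wseq_uniq (V : eqType) (nbrs : V -> seq V) x n : uniq (wseq nbrs x n).
Proof. by case: n => //= n; apply: undup_uniq. Qed.

Lemma mem_wseq (V : eqType) (nbrs : V -> seq V) x n y :
  (y \in wseq nbrs x n) = reachN nbrs n x y.
Proof.
elim: n y => [|n IH] y /=; first by rewrite inE eq_sym.
rewrite mem_undup; apply/flattenP/idP.
  case=> s /mapP [c hc ->] hy; apply: reachN_snoc hy.
  by rewrite -IH.
move/reachN_snocP=> [c hc hy]; exists (nbrs c) => //.
by apply/mapP; exists c; rewrite ?IH.
Qed.

Definition sph (V : eqType) (nbrs : V -> seq V) x k :=
  filter (fun y => isdist nbrs x y k) (wseq nbrs x k).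

Lemma sph_uniq (V : eqType) (nbrs : V -> seq V) x k : uniq (sph nbrs x k).
Proof. by rewrite filter_uniq // wseq_uniq. Qed.

Lemma mem_sph (V : eqType) (nbrs : V -> seq V) x k y :
  (y \in sph nbrs x k) = isdist nbrs x y k.
Proof.
rewrite mem_filter mem_wseq; apply/andP/idP => [[]//|h]; split=> //.
by case/andP: h.
Qed.

Lemma filt_swap (R : nmodType) (V : eqType) (s t : seq V) (F : V -> R) :
  uniq s -> uniq t ->
  \sum_(b <- s | b \in t) F b = \sum_(b <- t | b \in s) F b.
Proof.
move=> us ut.
rewrite -big_filter -[RHS]big_filter.
apply: perm_big.
apply: uniq_perm; rewrite ?filter_uniq //.
move=> z; rewrite !mem_filter; exact: andbC.
Qed.

Lemma swap_nbrs (R : nmodType) (V : eqType) (nbrs : V -> seq V)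
  (nbrs_uniq : forall a, uniq (nbrs a))
  (nbrs_sym : forall a b, (b \in nbrs a) = (a \in nbrs b))
  (A B : seq V) (f : V -> V -> R) : uniq A -> uniq B ->
  \sum_(a <- A) \sum_(b <- nbrs a | b \in B) f a b =
  \sum_(b <- B) \sum_(a <- nbrs b | a \in A) f a b.
Proof.
move=> uA uB.
transitivity (\sum_(a <- A) \sum_(b <- B) (if a \in nbrs b then f a b else 0)).
  apply: eq_bigr => a _; rewrite filt_swap // -big_mkcond /=.
  by apply: eq_bigl => b; rewrite nbrs_sym.
rewrite exchange_big /=; apply: eq_bigr => b _.
by rewrite -big_mkcond /= filt_swap.
Qed.

Theorem mainTheorem2 (R : realType) (V : choiceType) (nbrs : V -> seq V)
    (w : V -> V -> R) (u : V -> R) (x : V)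
    (nbrs_uniq : forall a, uniq (nbrs a))
    (nbrs_sym : forall a b, (b \in nbrs a) = (a \in nbrs b))
    (w_sym : forall a b, w a b = w b a)
    (w_pos : forall a b, b \in nbrs a -> 0 < w a b)
    (connected : forall a b, exists n, reachN nbrs n a b)
    (harmonic : forall v, \sum_(y <- nbrs v) w v y * (u y - u v) = 0) :
  forall k : nat, 0 <= Nflux nbrs w u x k /\ Nflux nbrs w u x k <= Nflux nbrs w u x k.+1.
Proof.
pose S k := sph nbrs x k.
have uS k : uniq (S k) := sph_uniq nbrs x k.
pose g a b := w a b * (u b ^+ 2 - u a ^+ 2).
pose F (A B : seq V) := \sum_(a <- A) \sum_(b <- nbrs a | b \in B) g a b.
pose D v := \sum_(y <- nbrs v) g v y.
have Dge0 v : 0 <= D v.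
  have -> : D v = \sum_(y <- nbrs v) w v y * (u y - u v) ^+ 2
      + 2 * u v * \sum_(y <- nbrs v) w v y * (u y - u v).
    rewrite big_distrr -big_split /=; apply: eq_bigr => y _; rewrite /g; ring.
  rewrite harmonic mulr0 addr0 big_seq; apply: sumr_ge0 => y hy.
  by rewrite mulr_ge0 ?sqr_ge0 // ltW // w_pos.
have Fanti (A B : seq V) : uniq A -> uniq B -> F A B = - F B A.
  move=> uA uB; rewrite /F (swap_nbrs nbrs_uniq nbrs_sym _ uA uB) -sumrN.
  apply: eq_bigr => b _; rewrite -sumrN; apply: eq_bigr => a _.
  rewrite /g w_sym; ring.
have FAA (A : seq V) : uniq A -> F A A = 0.
  by move=> uA; have := Fanti A A uA uA; lra.
have Neq k : Nflux nbrs w u x k = F (S k) (S k.+1).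
  rewrite /Nflux.
  have setE j : [set y | isdist nbrs x y j]%classic = [set` S j]%classic.
    by apply/seteqP; split => y; rewrite /= /S mem_sph.
  rewrite !setE -!fsbig_seq //.
  have -> : \sum_(y <- S k.+1) d_in nbrs w x k.+1 y * u y ^+ 2
      = \sum_(z <- S k) \sum_(y <- nbrs z | y \in S k.+1) w z y * u y ^+ 2.
    rewrite (swap_nbrs nbrs_uniq nbrs_sym (fun z y => w z y * u y ^+ 2) (uS k) (uS k.+1)).
    apply: eq_bigr => y _; rewrite /d_in big_distrl /=; apply: eq_bigl => z.
    by rewrite /S mem_sph.
  rewrite /F -sumrB; apply: eq_bigr => z _.
  have dout : d_out nbrs w x k z = \sum_(y <- nbrs z | y \in S k.+1) w z y.
    by apply: eq_bigl => y; rewrite /S mem_sph.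
  rewrite dout mulr_suml -sumrB; apply: eq_bigr => y _; rewrite /g; ring.
have eqc v (P Q : pred V) : (forall y, y \in nbrs v -> P y = Q y) ->
    \sum_(y <- nbrs v | P y) g v y = \sum_(y <- nbrs v | Q y) g v y.
  move=> H; rewrite big_seq_cond [RHS]big_seq_cond; apply: eq_bigl => y.
  by case: (boolP (y \in nbrs v)) => //= h; exact: H.
have dec v j : isdist nbrs x v j -> D v =
    \sum_(y <- nbrs v | y \in S j.+1) g v y + \sum_(y <- nbrs v | y \in S j) g v y
    + \sum_(y <- nbrs v | (0 < j)%N && (y \in S j.-1)) g v y.
  move=> hv; rewrite /D (bigID (fun y => y \in S j.+1)) /=.
  rewrite [X in _ + X = _](bigID (fun y => y \in S j)) /= addrA.
  congr (_ + _ + _); apply: eqc => y hy;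
    have [m [dm h1 h2]] := nbr_dist nbrs_sym hv hy;
    rewrite /S !mem_sph !(fun j0 => isdist_eq j0 dm); lia.
have G k : \sum_(v <- S k) D v = F (S k) (S k.+1) + F (S k) (S k)
    + \sum_(v <- S k) \sum_(y <- nbrs v | (0 < k)%N && (y \in S k.-1)) g v y.
  rewrite /F -!big_split big_seq [RHS]big_seq; apply: eq_bigr => v.
  by rewrite /S mem_sph => hv; exact: dec.
have sumD k : 0 <= \sum_(v <- S k) D v by apply: sumr_ge0 => v _.
have base : Nflux nbrs w u x 0 = \sum_(v <- S 0) D v.
  rewrite G FAA // addr0 Neq big1 ?addr0 // => v _.
  by rewrite big_pred0.
have step k : Nflux nbrs w u x k.+1 = Nflux nbrs w u x k + \sum_(v <- S k.+1) D v.
  rewrite G FAA // addr0 !Neq /=.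
  have -> : \sum_(v <- S k.+1) \sum_(y <- nbrs v | y \in S k) g v y = F (S k.+1) (S k) by [].
  rewrite (Fanti _ _ (uS k.+1) (uS k)); ring.
have pos k : 0 <= Nflux nbrs w u x k.
  elim: k => [|k IH]; first by rewrite base.
  by rewrite step addr_ge0.
by move=> k; split => //; rewrite step lerDl.
Qed.
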